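(* Given a PB instance $\langle N,P,c,b,\mathcal{A}\rangle$, let $l_o$ and $h_o$ be respectively the minimum and maximum of $|O_\succ|$ over all complete orders $\succ$ on $P$, where $O_\succ$ is the output of the ordered-fill algorithm with respect to $\succ$. Then $l_o$ and $h_o$ can be computed in polynomial time.
   Context: A PB instance is $\langle N,P,c,b,\mathcal{A}\rangle$ with voters $N$, projects $P=\{p_1,\dots,p_m\}$, costs $c:P\to\mathbb{N}$, budget $b\in\mathbb{N}$, approval sets $A_i\subseteq P$; $c(S)=\sum_{p\in S}c(p)$. The ordered-fill algorithm with respect to a complete (strict linear) order $\succ$ on $P$ starts with the empty set and adds projects one by one in order from highest-ranked to lowest-ranked in $\succ$, stopping as soon as the next ranked project does not fit within the budget (i.e., adding it would make the total cost exceed $b$); its output is the set selected up to that point. *)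

(* Defs.v *)
From mathcomp Require Import all_boot.
From Stdlib Require Import PeanoNat.

Set Implicit Arguments.
Unset Strict Implicit.
Unset Printing Implicit Defensive.

(* Participatory budgeting: projects are 'I_m, costs c : 'I_m -> nat,  *)
(* budget b : nat.                                                      *)

(* A complete (strict linear) order on the projects; [r x y] means x ≻ y. *)
Definition strict_total_order (m : nat) (r : rel 'I_m) : Prop :=
  irreflexive r /\ transitive r /\ (forall x y, x != y -> r x y || r y x).

(* The projects listed from highest-ranked to lowest-ranked. *)
Definition ranking (m : nat) (r : rel 'I_m) : seq 'I_m :=
  sort (fun x y => (x == y) || r x y) (enum 'I_m).

Fixpoint fill_from (T : Type) (c : T -> nat) (b spent : nat) (s : seq T)
  : seq T :=
  match s with
  | [::] => [::]
  | p :: s' =>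
      if spent + c p <= b then p :: fill_from c b (spent + c p) s'
      else [::]
  end.

Definition ordered_fill (m : nat) (c : 'I_m -> nat) (b : nat) (r : rel 'I_m)
  : seq 'I_m := fill_from c b 0 (ranking r).

Definition is_lo (m : nat) (c : 'I_m -> nat) (b : nat) (l : nat) : Prop :=
  (exists r : rel 'I_m, strict_total_order r /\ size (ordered_fill c b r) = l)
  /\ (forall r : rel 'I_m, strict_total_order r -> l <= size (ordered_fill c b r)).

Definition is_ho (m : nat) (c : 'I_m -> nat) (b : nat) (h : nat) : Prop :=
  (exists r : rel 'I_m, strict_total_order r /\ size (ordered_fill c b r) = h)
  /\ (forall r : rel 'I_m, strict_total_order r -> size (ordered_fill c b r) <= h).

(* Model of computation: a RAM (while-language with indirect addressing)  *)
(* over an unbounded memory nat -> nat, with the LOGARITHMIC cost         *)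
(* criterion (every value/address handled is charged its bit length).    *)

Definition nbits (n : nat) : nat := (Nat.log2 n).+1.

Inductive aexp : Type :=
  | ANum (n : nat)
  | ALoad (a : aexp)
  | AAdd (a1 a2 : aexp)
  | ASub (a1 a2 : aexp).        (* truncated subtraction *)

Inductive bexp : Type :=
  | BLe (a1 a2 : aexp)
  | BNot (e : bexp)
  | BAnd (e1 e2 : bexp).

Inductive com : Type :=
  | CSkip
  | CStore (a1 a2 : aexp)       (* mem[a1] := a2 *)
  | CSeq (c1 c2 : com)
  | CIf (e : bexp) (c1 c2 : com)
  | CWhile (e : bexp) (body : com).

Fixpoint aeval (mem : nat -> nat) (a : aexp) : nat * nat :=
  match a with
  | ANum n => (n, nbits n)
  | ALoad a' =>
      let (v, k) := aeval mem a' in (mem v, k + nbits v + nbits (mem v))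
  | AAdd a1 a2 =>
      let (v1, k1) := aeval mem a1 in
      let (v2, k2) := aeval mem a2 in
      (v1 + v2, k1 + k2 + nbits (v1 + v2))
  | ASub a1 a2 =>
      let (v1, k1) := aeval mem a1 in
      let (v2, k2) := aeval mem a2 in
      (v1 - v2, k1 + k2 + nbits v1 + nbits v2)
  end.

Fixpoint beval (mem : nat -> nat) (e : bexp) : bool * nat :=
  match e with
  | BLe a1 a2 =>
      let (v1, k1) := aeval mem a1 in
      let (v2, k2) := aeval mem a2 in
      (v1 <= v2, k1 + k2 + nbits v1 + nbits v2)
  | BNot e' => let (v, k) := beval mem e' in (~~ v, k.+1)
  | BAnd e1 e2 =>
      let (v1, k1) := beval mem e1 in
      let (v2, k2) := beval mem e2 in
      (v1 && v2, (k1 + k2).+1)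
  end.

(* Big-step execution with fuel (fuel only guarantees termination of the
   definition); returns final memory and total cost. *)
Fixpoint exec (fuel : nat) (c : com) (mem : nat -> nat)
  : option ((nat -> nat) * nat) :=
  match fuel with
  | 0 => None
  | f.+1 =>
    match c with
    | CSkip => Some (mem, 1)
    | CStore a1 a2 =>
        let (addr, k1) := aeval mem a1 in
        let (v, k2) := aeval mem a2 in
        Some ((fun i => if i == addr then v else mem i), (k1 + k2).+1)
    | CSeq c1 c2 =>
        match exec f c1 mem with
        | Some (m1, k1) =>
            match exec f c2 m1 with
            | Some (m2, k2) => Some (m2, k1 + k2)
            | None => None
            end
        | None => None
        end
    | CIf e c1 c2 =>
        let (v, k) := beval mem e in
        match exec f (if v then c1 else c2) mem with
        | Some (m1, k1) => Some (m1, (k + k1).+1)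
        | None => None
        end
    | CWhile e body =>
        let (v, k) := beval mem e in
        if v then
          match exec f body mem with
          | Some (m1, k1) =>
              match exec f (CWhile e body) m1 with
              | Some (m2, k2) => Some (m2, (k + k1 + k2).+1)
              | None => None
              end
          | None => None
          end
        else Some (mem, k.+1)
    end
  end.

Definition runs_to (p : com) (mem0 : nat -> nat) (out T : nat) : Prop :=
  exists fuel mem' cost,
    exec fuel p mem0 = Some (mem', cost) /\ cost <= T /\ mem' 0 = out.

Definition pb_input (m : nat) (c : 'I_m -> nat) (b : nat) : nat -> nat :=
  fun i => if i == 0 then m else if i == 1 then b
           else nth 0 [seq c p | p <- enum 'I_m] (i - 2).

(* Input length in bits (up to constant factors). *)
Definition pb_size (m : nat) (c : 'I_m -> nat) (b : nat) : nat :=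
  m + nbits b + \sum_(p < m) nbits (c p).

(* Main.v *)
Require Import Defs.
From Stdlib Require Import PeanoNat.
From mathcomp Require Import all_boot zify.

Set Implicit Arguments.
Unset Strict Implicit.
Unset Printing Implicit Defensive.


Lemma exec_mono f p mem r : exec f p mem = Some r ->
  forall f', f <= f' -> exec f' p mem = Some r.
Proof.
elim: f p mem r => [|f IH] p mem r //= H [|f'] //= Hf.
case: p H => //=.
- move=> c1 c2.
  case E1: (exec f c1 mem) => [[m1 k1]|] //.
  rewrite (IH _ _ _ E1 _ Hf).
  case E2: (exec f c2 m1) => [[m2 k2]|] //.
  by rewrite (IH _ _ _ E2 _ Hf).
- move=> e c1 c2.
  case: (beval mem e) => v k.
  case E1: (exec f _ mem) => [[m1 k1]|] //.
  by rewrite (IH _ _ _ E1 _ Hf).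
- move=> e body.
  case: (beval mem e) => v k.
  case: v => //.
  case E1: (exec f body mem) => [[m1 k1]|] //.
  rewrite (IH _ _ _ E1 _ Hf).
  case E2: (exec f (CWhile e body) m1) => [[m2 k2]|] //.
  by rewrite (IH _ _ _ E2 _ Hf).
Qed.

Definition triple (P : (nat -> nat) -> Prop) (p : com) (Q : (nat -> nat) -> Prop) (K : nat) :=
  forall mem, P mem -> exists f mem' k, exec f p mem = Some (mem', k) /\ k <= K /\ Q mem'.

Lemma conseq P P' p Q Q' K K' : triple P p Q K ->
  (forall mem, P' mem -> P mem) -> (forall mem, Q mem -> Q' mem) -> K <= K' ->
  triple P' p Q' K'.
Proof.
move=> H HP HQ HK mem /HP /H [f [m' [k [E [Hk HQm]]]]].
exists f, m', k; split => //; split; [exact: leq_trans HK| exact: HQ].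
Qed.

Lemma skip_rule P : triple P CSkip P 1.
Proof. by move=> mem HP; exists 1, mem, 1. Qed.

Lemma store_rule P a1 a2 Q K :
  (forall mem, P mem ->
     Q (fun i => if i == (aeval mem a1).1 then (aeval mem a2).1 else mem i) /\
     ((aeval mem a1).2 + (aeval mem a2).2).+1 <= K) ->
  triple P (CStore a1 a2) Q K.
Proof.
move=> H mem HP; exists 1; move: (H mem HP) => /=.
case: (aeval mem a1) => addr k1 /=; case: (aeval mem a2) => v k2 /= [HQ HK].
by exists (fun i => if i == addr then v else mem i), (k1 + k2).+1.
Qed.

Lemma seq_rule P R Q c1 c2 K1 K2 :
  triple P c1 R K1 -> triple R c2 Q K2 -> triple P (CSeq c1 c2) Q (K1 + K2).
Proof.
move=> H1 H2 mem /H1 [f1 [m1 [k1 [E1 [Hk1 /H2 [f2 [m2 [k2 [E2 [Hk2 HQ]]]]]]]]]].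
exists (maxn f1 f2).+1, m2, (k1 + k2) => /=.
rewrite (exec_mono E1 (leq_maxl f1 f2)) (exec_mono E2 (leq_maxr f1 f2)).
split => //; split => //; exact: leq_add.
Qed.

Lemma if_rule P e c1 c2 Q K Ke :
  (forall mem, P mem -> (beval mem e).2 <= Ke) ->
  triple (fun mem => P mem /\ (beval mem e).1) c1 Q K ->
  triple (fun mem => P mem /\ ~~ (beval mem e).1) c2 Q K ->
  triple P (CIf e c1 c2) Q (Ke + K).+1.
Proof.
move=> He H1 H2 mem HP.
have HKe := He _ HP.
case Eb: (beval mem e) HKe => [v k] /= HKe.
have [f [m1 [k1 [E [Hk HQ]]]]] :
  exists f mem' k, exec f (if v then c1 else c2) mem = Some (mem', k) /\ k <= K /\ Q mem'.
  case: v Eb => Eb; [apply: H1 | apply: H2]; by rewrite Eb.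
exists f.+1, m1, (k + k1).+1 => /=; rewrite Eb E; split => //; split => //.
by rewrite ltnS leq_add.
Qed.

Lemma while_rule (Inv : nat -> (nat -> nat) -> Prop) e body N Ke Kb :
  (forall i mem, i <= N -> Inv i mem -> (beval mem e).1 = (i < N) /\ (beval mem e).2 <= Ke) ->
  (forall i, i < N -> triple (Inv i) body (Inv i.+1) Kb) ->
  triple (Inv 0) (CWhile e body) (Inv N) (N * (Ke + Kb + 1) + Ke + 1).
Proof.
move=> He Hb.
suff: forall d i, i + d = N -> triple (Inv i) (CWhile e body) (Inv N) (d * (Ke + Kb + 1) + Ke + 1).
  by move/(_ N 0); apply.
elim=> [|d IH] i Hi mem HI.
- have [Hv Hk] := He i mem (ltac:(lia)) HI.
  rewrite addn0 in Hi; subst i.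
  exists 1, mem, (beval mem e).2.+1 => /=.
  case: (beval mem e) Hv Hk => v k /= -> Hk; rewrite ltnn; split => //; split => //.
  lia.
- have [Hv Hk] := He i mem (leq_trans (leq_addr _ _) (eq_leq Hi)) HI.
  have Hlt : i < N by lia.
  have [f1 [m1 [k1 [E1 [Hk1 HI1]]]]] := Hb i Hlt mem HI.
  have [f2 [m2 [k2 [E2 [Hk2 HQ]]]]] := IH i.+1 (ltac:(lia)) m1 HI1.
  exists (maxn f1 f2).+1, m2, ((beval mem e).2 + k1 + k2).+1 => /=.
  case: (beval mem e) Hv Hk => v k /= -> Hk; rewrite Hlt.
  rewrite (exec_mono E1 (leq_maxl f1 f2)) (exec_mono E2 (leq_maxr f1 f2)).
  split => //; split => //. lia.
Qed.


Lemma expn_pow a n : a ^ n = Nat.pow a n.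
Proof. elim: n => [|n IH] //; by rewrite expnS IH Nat.pow_succ_r'. Qed.

Lemma nbits_mono x y : x <= y -> nbits x <= nbits y.
Proof. move=> /leP H; rewrite /nbits ltnS; apply/leP; exact: Nat.log2_le_mono. Qed.

Lemma nbits_mulpow V s : 0 < V -> nbits (V * 2 ^ s) = s + nbits V.
Proof.
move=> HV; rewrite /nbits expn_pow -multE Nat.log2_mul_pow2; [|apply/leP => //|lia]. lia.
Qed.

Lemma nbits_le x V s : 0 < V -> x <= V * 2 ^ s -> nbits x <= s + nbits V.
Proof. by move=> HV /nbits_mono; rewrite nbits_mulpow. Qed.

Lemma nbits_lt x e : 0 < e -> x < 2 ^ e -> nbits x <= e.
Proof.
rewrite /nbits => He; case: x => [|x] H.
- by [].
- have : Nat.log2 x.+1 < e.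
    apply/ltP; apply/Nat.log2_lt_pow2; [lia|]. rewrite -expn_pow; exact/ltP.
  done.
Qed.

Lemma lt_nbits x : x < 2 ^ nbits x.
Proof.
rewrite /nbits; case: x => [|x] //.
have := Nat.log2_spec x.+1 (ltac:(lia)). rewrite -!expn_pow => [[_ /ltP]]. done.
Qed.

Lemma add_lt_pow x y a b : x < 2 ^ a -> y < 2 ^ b -> x + y < 2 ^ (a + b).
Proof.
move=> Hx Hy; rewrite expnD.
have Ha : 0 < 2 ^ a by rewrite expn_gt0.
have Hb : 0 < 2 ^ b by rewrite expn_gt0.
nia.
Qed.

Fixpoint asz (a : aexp) : nat :=
  match a with
  | ANum _ => 1
  | ALoad a => (asz a).+1
  | AAdd a1 a2 | ASub a1 a2 => (asz a1 + asz a2).+1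
  end.

Fixpoint amaxc (a : aexp) : nat :=
  match a with
  | ANum n => n
  | ALoad a => amaxc a
  | AAdd a1 a2 | ASub a1 a2 => maxn (amaxc a1) (amaxc a2)
  end.

Fixpoint bsz (e : bexp) : nat :=
  match e with
  | BLe a1 a2 => (asz a1 + asz a2).+1
  | BNot e => (bsz e).+1
  | BAnd e1 e2 => (bsz e1 + bsz e2).+1
  end.

Fixpoint bmaxc (e : bexp) : nat :=
  match e with
  | BLe a1 a2 => maxn (amaxc a1) (amaxc a2)
  | BNot e => bmaxc e
  | BAnd e1 e2 => maxn (bmaxc e1) (bmaxc e2)
  end.

Lemma pow_sz s1 s2 : 2 ^ s1 + 2 ^ s2 <= 2 ^ (s1 + s2).+1.
Proof.
have H1 : 2 ^ s1 <= 2 ^ (s1 + s2) by rewrite leq_exp2l // leq_addr.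
have H2 : 2 ^ s2 <= 2 ^ (s1 + s2) by rewrite leq_exp2l // leq_addl.
rewrite expnS; lia.
Qed.

Lemma aeval_bound mem V a : 0 < V -> (forall i, mem i <= V) -> amaxc a <= V ->
  (aeval mem a).1 <= V * 2 ^ asz a /\
  (aeval mem a).2 <= 4 * asz a * (asz a + nbits V).
Proof.
move=> HV Hm; elim: a => [n|a IH|a1 IH1 a2 IH2|a1 IH1 a2 IH2] /= Hc.
- split; first by rewrite expn1; lia.
  have := nbits_mono Hc; lia.
- have [Hv Hk] := IH Hc.
  case: (aeval mem a) Hv Hk => v k /= Hv Hk.
  have H1 := nbits_le HV Hv; have H2 := nbits_mono (Hm v).
  have H3 : V <= V * 2 ^ (asz a).+1 by rewrite leq_pmulr // expn_gt0.
  split; first by have := Hm v; lia.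
  nia.
- have [Hv1 Hk1] := IH1 (leq_trans (leq_maxl _ _) Hc).
  have [Hv2 Hk2] := IH2 (leq_trans (leq_maxr _ _) Hc).
  case: (aeval mem a1) Hv1 Hk1 => v1 k1 /= Hv1 Hk1.
  case: (aeval mem a2) Hv2 Hk2 => v2 k2 /= Hv2 Hk2.
  have Hs : v1 + v2 <= V * 2 ^ (asz a1 + asz a2).+1.
    apply: leq_trans (leq_add Hv1 Hv2) _; rewrite -mulnDr leq_mul2l pow_sz orbT //.
  split => //.
  have := nbits_le HV Hs. nia.
- have [Hv1 Hk1] := IH1 (leq_trans (leq_maxl _ _) Hc).
  have [Hv2 Hk2] := IH2 (leq_trans (leq_maxr _ _) Hc).
  case: (aeval mem a1) Hv1 Hk1 => v1 k1 /= Hv1 Hk1.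
  case: (aeval mem a2) Hv2 Hk2 => v2 k2 /= Hv2 Hk2.
  have H1 : 2 ^ asz a1 <= 2 ^ (asz a1 + asz a2).+1 by rewrite leq_exp2l //; lia.
  split; first by apply: leq_trans (leq_subr _ _) _; apply: leq_trans Hv1 _; rewrite leq_mul2l H1 orbT.
  have := nbits_le HV Hv1; have := nbits_le HV Hv2. nia.
Qed.

Lemma beval_bound mem V e : 0 < V -> (forall i, mem i <= V) -> bmaxc e <= V ->
  (beval mem e).2 <= 4 * bsz e * (bsz e + nbits V).
Proof.
move=> HV Hm; elim: e => [a1 a2|e IH|e1 IH1 e2 IH2] /= Hc.
- have [Hv1 Hk1] := aeval_bound HV Hm (leq_trans (leq_maxl _ _) Hc).
  have [Hv2 Hk2] := aeval_bound HV Hm (leq_trans (leq_maxr _ _) Hc).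
  case: (aeval mem a1) Hv1 Hk1 => v1 k1 /= Hv1 Hk1.
  case: (aeval mem a2) Hv2 Hk2 => v2 k2 /= Hv2 Hk2.
  have := nbits_le HV Hv1; have := nbits_le HV Hv2. nia.
- have := IH Hc; case: (beval mem e) => v k /=; nia.
- have := IH1 (leq_trans (leq_maxl _ _) Hc).
  have := IH2 (leq_trans (leq_maxr _ _) Hc).
  case: (beval mem e1) => v1 k1; case: (beval mem e2) => v2 k2 /=. nia.
Qed.

Lemma aval_num mem n : (aeval mem (ANum n)).1 = n. Proof. by []. Qed.
Lemma aval_load mem a : (aeval mem (ALoad a)).1 = mem (aeval mem a).1.
Proof. by rewrite /=; case: (aeval mem a). Qed.
Lemma aval_add mem a1 a2 : (aeval mem (AAdd a1 a2)).1 = (aeval mem a1).1 + (aeval mem a2).1.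
Proof. by rewrite /=; case: (aeval mem a1); case: (aeval mem a2). Qed.
Lemma bval_le mem a1 a2 : (beval mem (BLe a1 a2)).1 = ((aeval mem a1).1 <= (aeval mem a2).1).
Proof. by rewrite /=; case: (aeval mem a1); case: (aeval mem a2). Qed.
Lemma bval_not mem e : (beval mem (BNot e)).1 = ~~ (beval mem e).1.
Proof. by rewrite /=; case: (beval mem e). Qed.
Lemma bval_and mem e1 e2 : (beval mem (BAnd e1 e2)).1 = (beval mem e1).1 && (beval mem e2).1.
Proof. by rewrite /=; case: (beval mem e1); case: (beval mem e2). Qed.


Lemma fill_char (T : Type) (c : T -> nat) b sp s : sp <= b ->
  size (fill_from c b sp s) <= size s /\
  forall k, k <= size s -> (k <= size (fill_from c b sp s)) = (sp + \sum_(x <- take k s) c x <= b).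
Proof.
elim: s sp => [|p s IH] sp Hsp /=.
  split => // k; rewrite leqn0 => /eqP ->; by rewrite big_nil addn0 Hsp.
case: ifP => Hp.
- have [H1 H2] := IH _ Hp; split => //= [] [|k] Hk.
  + by rewrite big_nil addn0 Hsp.
  + by rewrite ltnS H2 // big_cons addnA.
- split => // [] [|k] Hk.
  + by rewrite big_nil addn0 Hsp.
  + rewrite /= big_cons addnA; apply/esym/negbTE; rewrite -ltnNge.
    move/negbT: Hp; rewrite -ltnNge => Hp; exact: leq_trans Hp (leq_addr _ _).
Qed.

Section Math.
Variables (m : nat) (c : 'I_m -> nat) (b : nat).

Definition le (r : rel 'I_m) x y := (x == y) || r x y.

Lemma le_refl (r : rel 'I_m) : reflexive (le r). Proof. by move=> x; rewrite /le eqxx. Qed.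

Lemma le_trans (r : rel 'I_m) : strict_total_order r -> transitive (le r).
Proof.
move=> [Hirr [Htr Htot]] y x z; rewrite /le.
case/orP => [/eqP ->|Hxy] //; case/orP => [/eqP <-|Hyz]; first by rewrite Hxy orbT.
by rewrite (Htr _ _ _ Hxy Hyz) orbT.
Qed.

Lemma le_total (r : rel 'I_m) : strict_total_order r -> total (le r).
Proof.
move=> [Hirr [Htr Htot]] x y; rewrite /le.
case: (eqVneq x y) => [->|Hne] /=; first by rewrite ?eqxx.
exact: Htot.
Qed.

Lemma ranking_perm (r : rel 'I_m) : perm_eq (ranking r) (enum 'I_m).
Proof. by rewrite /ranking perm_sort. Qed.

Lemma ranking_uniq (r : rel 'I_m) : uniq (ranking r).
Proof. by rewrite (perm_uniq (ranking_perm r)) enum_uniq. Qed.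

Lemma ranking_size (r : rel 'I_m) : size (ranking r) = m.
Proof. by rewrite (perm_size (ranking_perm r)) size_enum_ord. Qed.

Lemma ranking_mem (r : rel 'I_m) x : x \in ranking r.
Proof. by rewrite (perm_mem (ranking_perm r)) mem_enum. Qed.

Lemma ranking_sorted (r : rel 'I_m) : strict_total_order r -> sorted (le r) (ranking r).
Proof. move=> H; exact: sort_sorted (le_total H) _. Qed.

Lemma take_le (r : rel 'I_m) k u v : strict_total_order r ->
  u \in take k (ranking r) -> v \notin take k (ranking r) -> le r u v.
Proof.
move=> H Hu Hv.
set s := ranking r in Hu Hv *.
have iu := index_ltn Hu.
have iv : k <= index v s by rewrite in_take ?ranking_mem // -leqNgt in Hv.
have := @sorted_leq_nth _ _ (le_trans H) (le_refl r) u s (ranking_sorted H) (index u s) (index v s).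
rewrite !inE !index_mem !ranking_mem !nth_index ?ranking_mem //; apply => //.
exact: leq_trans (ltnW iu) iv.
Qed.

Lemma le_set (r : rel 'I_m) x0 p y : strict_total_order r -> p < m ->
  le r y (nth x0 (ranking r) p) = (y \in take p.+1 (ranking r)).
Proof.
move=> H Hp.
set s := ranking r.
have Hps : p < size s by rewrite ranking_size.
rewrite in_take ?ranking_mem // ltnS.
have Hy : index y s < size s by rewrite index_mem ranking_mem.
case: (leqP (index y s) p) => Hyp.
- have := @sorted_leq_nth _ _ (le_trans H) (le_refl r) x0 s (ranking_sorted H) (index y s) p.
  by rewrite !inE Hy Hps nth_index ?ranking_mem //; apply.
- have := @sorted_leq_nth _ _ (le_trans H) (le_refl r) x0 s (ranking_sorted H) p (index y s).
  rewrite !inE Hy Hps nth_index ?ranking_mem // => /(_ isT isT (ltnW Hyp)).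
  have Hne : nth x0 s p != y.
    apply/eqP => E; move: Hyp; rewrite -E index_uniq ?ranking_uniq //; lia.
  rewrite /le (negbTE Hne) /= => Hxy.
  apply/negbTE; rewrite eq_sym (negbTE Hne) /=; apply/negP => Hyx.
  case: H => Hirr [Htr _].
  by move: (Htr _ _ _ Hxy Hyx); rewrite Hirr.
Qed.

Definition H (r : rel 'I_m) := \sum_(x : 'I_m) (if \sum_(y | le r y x) c y <= b then 1 else 0).

Lemma F_eq_H (r : rel 'I_m) : strict_total_order r -> size (ordered_fill c b r) = H r.
Proof.
move=> Hr.
have [H1 H2] := fill_char c (ranking r) (leq0n b).
rewrite ranking_size in H1 H2.
rewrite /ordered_fill /H.
set F := size _.
case: (posnP m) => Hm.
  rewrite big1; last by move=> x; have := ltn_ord x; lia.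
  rewrite /F; lia.
pose x0 := Ordinal Hm.
rewrite -big_enum /= -(perm_big _ (ranking_perm r)) (big_nth x0) ranking_size.
rewrite big_mkcond /=.
under eq_big_nat => p Hp.
  rewrite (@eq_bigl _ _ _ _ _ _ (fun y => y \in take p.+1 (ranking r))); last first.
    by move=> y; rewrite (le_set x0 y Hr) //; lia.
  rewrite -big_uniq; last by apply: take_uniq; exact: ranking_uniq.
  rewrite -[X in X <= b]add0n -(H2 p.+1); last by case/andP: Hp.
over.
rewrite (big_cat_nat (leq0n F) H1) /=.
rewrite big_nat_cond (eq_bigr (fun _ => 1)); last by move=> i /andP [/andP [_ ->]].
rewrite -big_nat_cond sum_nat_const_nat subn0 muln1.
rewrite big_nat_cond big1 ?addn0 // => i /andP [/andP [Hi _] _].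
by rewrite ltnNge Hi.
Qed.
End Math.


Section Ex.
Variables (m : nat) (c : 'I_m -> nat) (b : nat).

Lemma exch (A T : {set 'I_m}) : #|A| = #|T| ->
  (forall u v, u \in A -> u \notin T -> v \in T -> v \notin A -> c u <= c v) ->
  \sum_(u in A) c u <= \sum_(v in T) c v.
Proof.
move=> Hc Huv.
rewrite (big_setID T) (big_setID A (A := T)) /= setIC leq_add2l.
have Hcard : #|A :\: T| = #|T :\: A|.
  have := cardsID T A; have := cardsID A T; rewrite setIC; lia.
set M := \max_(u in A :\: T) c u.
apply: (@leq_trans (#|A :\: T| * M)).
  rewrite -sum_nat_const; apply: leq_sum => u Hu; exact: leq_bigmax_cond.
rewrite Hcard -sum_nat_const; apply: leq_sum => v; rewrite inE => /andP [HvA HvT].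
apply/bigmax_leqP => u; rewrite inE => /andP [HuT HuA]; exact: Huv.
Qed.

Lemma sum_take (r : rel 'I_m) k :
  \sum_(x <- take k (ranking r)) c x = \sum_(x in [set y in take k (ranking r)]) c x.
Proof.
rewrite big_uniq; last by apply: take_uniq; exact: ranking_uniq.
by apply: eq_bigl => x; rewrite inE.
Qed.

Lemma card_take (r : rel 'I_m) k : k <= m -> #|[set y in take k (ranking r)]| = k.
Proof.
move=> Hk; rewrite cardsE.
move/card_uniqP: (take_uniq k (ranking_uniq r)) ->.
by rewrite size_take ranking_size; case: ltngtP Hk => //; lia.
Qed.

Lemma prefix_cmp (r r0 : rel 'I_m) k : strict_total_order r0 -> k <= m ->
  (forall u v, le r0 v u -> c v <= c u) ->
  \sum_(x <- take k (ranking r0)) c x <= \sum_(x <- take k (ranking r)) c x.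
Proof.
move=> H0 Hk Hmono; rewrite !sum_take; apply: exch; first by rewrite !card_take.
move=> u v; rewrite !inE => Hu _ _ Hv; apply: Hmono; exact: take_le H0 Hu Hv.
Qed.

Lemma prefix_cmp' (r r0 : rel 'I_m) k : strict_total_order r0 -> k <= m ->
  (forall u v, le r0 v u -> c u <= c v) ->
  \sum_(x <- take k (ranking r)) c x <= \sum_(x <- take k (ranking r0)) c x.
Proof.
move=> H0 Hk Hmono; rewrite !sum_take; apply: exch; first by rewrite !card_take.
move=> u v; rewrite !inE => _ Hu Hv _; apply: Hmono; exact: take_le H0 Hv Hu.
Qed.

Definition lth (x y : 'I_m) := (c x < c y) || ((c x == c y) && (x < y)).
Definition ltl (x y : 'I_m) := lth y x.

Lemma lth_sto : strict_total_order lth.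
Proof.
rewrite /lth; split; [|split].
- by move=> x; rewrite ltnn eqxx ltnn.
- move=> y x z /orP [H1|/andP [/eqP H1 H2]] /orP [H3|/andP [/eqP H3 H4]]; apply/orP.
  + left; lia.
  + left; lia.
  + left; lia.
  + right; apply/andP; split; [apply/eqP; lia| lia].
- move=> x y Hne; rewrite /lth.
  case: (ltngtP (c x) (c y)) => //= E; rewrite ?E ?eqxx /=.
  have : val x != val y by [].
  by case: ltngtP.
Qed.

Lemma ltl_sto : strict_total_order ltl.
Proof.
case: lth_sto => Hi [Ht Htot]; rewrite /ltl; split; [|split].
- exact: Hi.
- move=> y x z H1 H2; exact: Ht H2 H1.
- by move=> x y /Htot; rewrite orbC.
Qed.

Lemma lth_mono u v : le lth v u -> c v <= c u.
Proof. by rewrite /le /lth => /orP [/eqP ->|/orP [/ltnW|/andP [/eqP -> _]]]. Qed.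

Lemma ltl_mono u v : le ltl v u -> c u <= c v.
Proof. by rewrite /le /ltl /lth => /orP [/eqP ->|/orP [/ltnW|/andP [/eqP -> _]]]. Qed.

Lemma ho_ok : is_ho c b (H c b lth).
Proof.
split; first by exists lth; split; [exact: lth_sto| exact: F_eq_H lth_sto].
move=> r Hr.
rewrite -(F_eq_H c b lth_sto).
have [Hs1 Hs2] := fill_char c (ranking r) (leq0n b).
have [Hh1 Hh2] := fill_char c (ranking lth) (leq0n b).
rewrite ranking_size in Hs1 Hs2. rewrite ranking_size in Hh1 Hh2.
rewrite /ordered_fill.
set k := size (fill_from c b 0 (ranking r)).
rewrite Hh2 ?ranking_size //=.
have := Hs2 k Hs1; rewrite ?ranking_size leqnn /= => /esym Hb.
apply: leq_trans _ Hb; apply: leq_add => //; apply: (prefix_cmp r lth_sto Hs1) => u v; exact: lth_mono.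
Qed.

Lemma lo_ok : is_lo c b (H c b ltl).
Proof.
split; first by exists ltl; split; [exact: ltl_sto| exact: F_eq_H ltl_sto].
move=> r Hr.
rewrite -(F_eq_H c b ltl_sto).
have [Hs1 Hs2] := fill_char c (ranking r) (leq0n b).
have [Hh1 Hh2] := fill_char c (ranking ltl) (leq0n b).
rewrite ranking_size in Hs1 Hs2. rewrite ranking_size in Hh1 Hh2.
rewrite /ordered_fill.
set k := size (fill_from c b 0 (ranking ltl)).
rewrite Hs2 ?ranking_size //=.
have := Hh2 k Hh1; rewrite ?ranking_size leqnn /= => /esym Hb.
apply: leq_trans _ Hb; apply: leq_add => //; apply: (prefix_cmp' r ltl_sto Hh1) => u v; exact: ltl_mono.
Qed.
End Ex.


Definition M := ALoad (ANum 0).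
Definition Xv k := AAdd M (ANum (2 + k)).
Definition Vv k := ALoad (Xv k).
Definition Cof a := ALoad (AAdd (ANum 2) a).

Definition lexb ey ex :=
  BAnd (BLe (Cof ey) (Cof ex)) (BNot (BAnd (BLe (Cof ex) (Cof ey)) (BNot (BLe ey ex)))).

Definition inner (cnd : bexp) :=
  CWhile (BNot (BLe M (Vv 1)))
    (CSeq (CIf cnd (CStore (Xv 2) (AAdd (Vv 2) (Cof (Vv 1)))) CSkip)
          (CStore (Xv 1) (AAdd (Vv 1) (ANum 1)))).

Definition outer_body (cnd : bexp) :=
  CSeq (CStore (Xv 2) (ANum 0))
  (CSeq (CStore (Xv 1) (ANum 0))
  (CSeq (inner cnd)
  (CSeq (CIf (BLe (Vv 2) (ALoad (ANum 1))) (CStore (Xv 3) (AAdd (Vv 3) (ANum 1))) CSkip)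
        (CStore (Xv 0) (AAdd (Vv 0) (ANum 1)))))).

Definition prog (cnd : bexp) :=
  CSeq (CWhile (BNot (BLe M (Vv 0))) (outer_body cnd)) (CStore (ANum 0) (Vv 3)).

Section Prog.
Variables (m b V : nat) (cn : nat -> nat).

Record St (mem : nat -> nat) (i j s cnt : nat) : Prop := {
  st0 : mem 0 = m; st1 : mem 1 = b; stc : forall y, y < m -> mem (2 + y) = cn y;
  sti : mem (m + 2) = i; stj : mem (m + 3) = j; sts : mem (m + 4) = s;
  stn : mem (m + 5) = cnt; stV : forall a, mem a <= V }.

Lemma val_M mem i j s n : St mem i j s n -> (aeval mem M).1 = m.
Proof. by case. Qed.
Lemma val_X mem i j s n k : St mem i j s n -> (aeval mem (Xv k)).1 = m + (2 + k).
Proof. by move=> H; rewrite /Xv aval_add (val_M H). Qed.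
Lemma val_V0 mem i j s n : St mem i j s n -> (aeval mem (Vv 0)).1 = i.
Proof. by move=> H; rewrite /Vv aval_load (val_X _ H); case: H. Qed.
Lemma val_V1 mem i j s n : St mem i j s n -> (aeval mem (Vv 1)).1 = j.
Proof. by move=> H; rewrite /Vv aval_load (val_X _ H); case: H. Qed.
Lemma val_V2 mem i j s n : St mem i j s n -> (aeval mem (Vv 2)).1 = s.
Proof. by move=> H; rewrite /Vv aval_load (val_X _ H); case: H. Qed.
Lemma val_V3 mem i j s n : St mem i j s n -> (aeval mem (Vv 3)).1 = n.
Proof. by move=> H; rewrite /Vv aval_load (val_X _ H); case: H. Qed.
Lemma val_C mem i j s n a : St mem i j s n -> (aeval mem a).1 < m ->
  (aeval mem (Cof a)).1 = cn (aeval mem a).1.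
Proof. by move=> H Ha; rewrite /Cof aval_load aval_add aval_num; case: H => _ _ ->. Qed.

End Prog.
Ltac updt := move=> [? ? ? ? ? ? ? ?] ?; split => [|||||||?] /=;
  try (move=> ? ?); (case: ifP => /eqP ?; try (exfalso; lia)); auto.
Lemma upd0 m b V cn mem i j s n v : St m b V cn mem i j s n -> v <= V ->
  St m b V cn (fun a => if a == m + (2 + 0) then v else mem a) v j s n.
Proof. updt. Qed.
Lemma upd1 m b V cn mem i j s n v : St m b V cn mem i j s n -> v <= V ->
  St m b V cn (fun a => if a == m + (2 + 1) then v else mem a) i v s n.
Proof. updt. Qed.
Lemma upd2 m b V cn mem i j s n v : St m b V cn mem i j s n -> v <= V ->
  St m b V cn (fun a => if a == m + (2 + 2) then v else mem a) i j v n.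
Proof. updt. Qed.
Lemma upd3 m b V cn mem i j s n v : St m b V cn mem i j s n -> v <= V ->
  St m b V cn (fun a => if a == m + (2 + 3) then v else mem a) i j s v.
Proof. updt. Qed.

Section Verif.
Variables (m b V : nat) (cn : nat -> nat) (R : nat -> nat -> bool) (cnd : bexp).
Hypothesis HV10 : 10 <= V.
Hypothesis HmV : m <= V.
Hypothesis HSV : \sum_(0 <= y < m) cn y <= V.
Hypothesis Hcnd : forall mem i j s n, St m b V cn mem i j s n -> i < m -> j < m ->
  (beval mem cnd).1 = R j i.
Hypothesis Hcsz : bsz cnd <= 50.
Hypothesis Hcmax : bmaxc cnd <= 10.

Definition A := 300 * (50 + nbits V).

Lemma A_ge1 : 1 <= A. Proof. rewrite /A; lia. Qed.

Lemma store_cost mem i j s n a1 a2 : St m b V cn mem i j s n ->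
  amaxc a1 <= 10 -> amaxc a2 <= 10 -> asz a1 <= 25 -> asz a2 <= 25 ->
  ((aeval mem a1).2 + (aeval mem a2).2).+1 <= A.
Proof.
move=> H c1 c2 s1 s2.
have HV : 0 < V by lia.
have [_ k1] := aeval_bound (a:=a1) HV (stV H) (leq_trans c1 HV10).
have [_ k2] := aeval_bound (a:=a2) HV (stV H) (leq_trans c2 HV10).
rewrite /A; nia.
Qed.

Lemma guard_cost mem i j s n e : St m b V cn mem i j s n ->
  bmaxc e <= 10 -> bsz e <= 50 -> (beval mem e).2 <= A.
Proof.
move=> H c1 s1.
have HV : 0 < V by lia.
have k1 := beval_bound (e:=e) HV (stV H) (leq_trans c1 HV10).
rewrite /A; nia.
Qed.

Definition S x j := \sum_(0 <= y < j) (if R y x then cn y else 0).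
Definition cntf i := \sum_(0 <= x < i) (if S x m <= b then 1 else 0).

Lemma S_le x j : j <= m -> S x j <= V.
Proof.
move=> Hj; apply: leq_trans HSV.
apply: (@leq_trans (\sum_(0 <= y < j) cn y)).
  by apply: leq_sum => y _; case: R.
by rewrite (big_cat_nat (leq0n j) Hj) leq_addr.
Qed.

Lemma S0 x : S x 0 = 0. Proof. by rewrite /S big_geq. Qed.
Lemma SS x j : S x j.+1 = S x j + (if R j x then cn j else 0).
Proof. by rewrite /S big_nat_recr. Qed.

Lemma cntf_le i : cntf i <= i.
Proof.
apply: (@leq_trans (\sum_(0 <= x < i) 1)); first by apply: leq_sum => x _; case: ifP.
by rewrite sum_nat_const_nat muln1 subn0.
Qed.
Lemma cntf0 : cntf 0 = 0. Proof. by rewrite /cntf big_geq. Qed.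
Lemma cntfS i : cntf i.+1 = cntf i + (if S i m <= b then 1 else 0).
Proof. by rewrite /cntf big_nat_recr. Qed.

Definition Kin := m * (A + ((A + A).+1 + A) + 1) + A + 1.

Lemma inner_ok x n : x < m -> n <= V ->
  triple (fun mem => St m b V cn mem x 0 0 n) (inner cnd)
         (fun mem => St m b V cn mem x m (S x m) n) Kin.
Proof.
move=> Hx Hn.
eapply conseq; [apply: (@while_rule (fun j mem => St m b V cn mem x j (S x j) n) _ _ m A ((A + A).+1 + A)) | by move=> mem; rewrite S0 | by [] | by [] ].
- move=> j mem Hj H; split.
  + by rewrite bval_not bval_le (val_M H) (val_V1 H) ltnNge.
  + exact: guard_cost H _ _.
- move=> j Hj.
  apply: (seq_rule (R := fun mem => St m b V cn mem x j (S x j.+1) n)).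
  + apply: if_rule.
    * move=> mem H; exact: guard_cost H Hcmax Hcsz.
    * apply: store_rule => mem [H Hc]; split; last exact: store_cost H _ _ _ _.
      rewrite (val_X _ H) aval_add (val_V2 H) (val_C H) (val_V1 H) //.
      rewrite (Hcnd H Hx Hj) in Hc.
      have HS := S_le x Hj; rewrite SS Hc in HS *; exact: upd2 H HS.
    * eapply conseq; [exact: (@skip_rule (fun mem => St m b V cn mem x j (S x j.+1) n)) | | by [] | exact: A_ge1].
      move=> mem [H Hc]; rewrite (Hcnd H Hx Hj) in Hc.
      by rewrite SS (negbTE Hc) addn0.
  + apply: store_rule => mem H; split; last exact: store_cost H _ _ _ _.
    rewrite (val_X _ H) aval_add (val_V1 H) aval_num (addn1 j).
    apply: upd1 H _; lia.
Qed.

Definition Kbo := A + (A + (Kin + ((A + A).+1 + A))).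
Definition Ktot := m * (A + Kbo + 1) + A + 1 + A.

Lemma prog_ok :
  triple (fun mem => St m b V cn mem 0 0 0 0) (prog cnd) (fun mem => mem 0 = cntf m) Ktot.
Proof.
have cntV : forall i, i <= m -> cntf i <= V.
  move=> i Hi; apply: leq_trans (cntf_le i) _; lia.
apply: (seq_rule (R := fun mem => exists j s, St m b V cn mem m j s (cntf m))).
  eapply conseq; [apply: (@while_rule (fun i mem => exists j s, St m b V cn mem i j s (cntf i)) _ _ m A Kbo) | | by [] | by [] ].
  - move=> i mem Hi [j [s H]]; split.
    + by rewrite bval_not bval_le (val_M H) (val_V0 H) ltnNge.
    + exact: guard_cost H _ _.
  - move=> i Hi.
    apply: (seq_rule (R := fun mem => exists j, St m b V cn mem i j 0 (cntf i))).
      apply: store_rule => mem [j [s H]]; split; last exact: store_cost H _ _ _ _.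
      rewrite (val_X _ H) aval_num; exists j; apply: upd2 H _; lia.
    apply: (seq_rule (R := fun mem => St m b V cn mem i 0 0 (cntf i))).
      apply: store_rule => mem [j H]; split; last exact: store_cost H _ _ _ _.
      rewrite (val_X _ H) aval_num; apply: upd1 H _; lia.
    apply: (seq_rule (R := fun mem => St m b V cn mem i m (S i m) (cntf i))).
      exact: inner_ok Hi (cntV i (ltnW Hi)).
    apply: (seq_rule (R := fun mem => St m b V cn mem i m (S i m) (cntf i.+1))).
      apply: if_rule.
      * move=> mem H; exact: guard_cost H _ _.
      * apply: store_rule => mem [H Hc]; split; last exact: store_cost H _ _ _ _.
        rewrite bval_le (val_V2 H) aval_load aval_num (st1 H) in Hc.
        rewrite (val_X _ H) aval_add (val_V3 H) aval_num.
        have HS := cntV i.+1 Hi; rewrite cntfS Hc in HS *; exact: upd3 H HS.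
      * eapply conseq; [exact: (@skip_rule (fun mem => St m b V cn mem i m (S i m) (cntf i.+1))) | | by [] | exact: A_ge1].
        move=> mem [H Hc]; rewrite bval_le (val_V2 H) aval_load aval_num (st1 H) in Hc.
        by rewrite cntfS (negbTE Hc) addn0.
    apply: store_rule => mem H; split; last exact: store_cost H _ _ _ _.
    rewrite (val_X _ H) aval_add (val_V0 H) aval_num (addn1 i).
    exists m, (S i m); apply: upd0 H _; lia.
  - by move=> mem H; exists 0, 0; rewrite cntf0.
apply: store_rule => mem [j [s H]]; split; last exact: store_cost H _ _ _ _.
by rewrite aval_num (val_V3 H) eqxx.
Qed.
End Verif.


Definition lexR (cn : nat -> nat) y x := (cn y <= cn x) && ~~ ((cn x <= cn y) && ~~ (y <= x)).

Lemma lexb_val m b V cn mem i j s n ey ex :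
  St m b V cn mem i j s n -> (aeval mem ey).1 < m -> (aeval mem ex).1 < m ->
  (beval mem (lexb ey ex)).1 = lexR cn (aeval mem ey).1 (aeval mem ex).1.
Proof.
move=> H Hy Hx.
by rewrite /lexb !bval_and !bval_not !bval_and !bval_not !bval_le !(val_C H).
Qed.

Section Inst.
Variables (m : nat) (c : 'I_m -> nat) (b : nat).

Definition cn := fun y => nth 0 [seq c p | p <- enum 'I_m] y.
Definition VV := m + b + \sum_(p < m) c p + 10.

Lemma cnE (p : 'I_m) : cn p = c p.
Proof. by rewrite /cn (nth_map p) ?size_enum_ord ?ltn_ord // nth_ord_enum. Qed.

Lemma sum_cn : \sum_(0 <= y < m) cn y = \sum_(p < m) c p.
Proof. by rewrite big_mkord; apply: eq_bigr => p _; rewrite cnE. Qed.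

Lemma cn_le y : cn y <= \sum_(p < m) c p.
Proof.
case: (ltnP y m) => Hy.
  rewrite (cnE (Ordinal Hy)) (bigD1 (Ordinal Hy)) //=; exact: leq_addr.
by rewrite /cn nth_default // size_map size_enum_ord.
Qed.

Lemma init_St : St m b VV cn (pb_input c b) 0 0 0 0.
Proof.
rewrite /pb_input; split => /=.
- by [].
- by [].
- move=> y Hy; rewrite /= subn2 /=. by [].
- rewrite (_ : m + 2 == 0 = false); last lia.
  rewrite (_ : m + 2 == 1 = false); last lia.
  by rewrite nth_default // size_map size_enum_ord; lia.
- rewrite (_ : m + 3 == 0 = false); last lia.
  rewrite (_ : m + 3 == 1 = false); last lia.
  by rewrite nth_default // size_map size_enum_ord; lia.
- rewrite (_ : m + 4 == 0 = false); last lia.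
  rewrite (_ : m + 4 == 1 = false); last lia.
  by rewrite nth_default // size_map size_enum_ord; lia.
- rewrite (_ : m + 5 == 0 = false); last lia.
  rewrite (_ : m + 5 == 1 = false); last lia.
  by rewrite nth_default // size_map size_enum_ord; lia.
- move=> a; rewrite /VV; case: ifP => _; first lia.
  case: ifP => _; first lia.
  have := cn_le (a - 2); rewrite /cn; lia.
Qed.
End Inst.

Lemma lex_equiv m (c : 'I_m -> nat) (x y : 'I_m) :
  ((c y <= c x) && ~~ ((c x <= c y) && ~~ (y <= x))) = le (lth c) y x.
Proof.
rewrite /le /lth.
case: (eqVneq y x) => [->|Hne] /=; first by rewrite !leqnn.
have Hv : val y != val x by [].
case: (ltngtP (c y) (c x)) => //= _.
by rewrite negbK ltn_neqAle Hv.
Qed.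

Lemma cntf_h m (c : 'I_m -> nat) b :
  cntf m b (cn c) (fun j i => lexR (cn c) j i) m = H c b (lth c).
Proof.
rewrite /cntf /H big_mkord; apply: eq_bigr => x _.
congr (if _ <= b then _ else _).
rewrite /S big_mkord [RHS]big_mkcond /=; apply: eq_bigr => y _.
by rewrite /lexR !cnE lex_equiv.
Qed.

Lemma cntf_l m (c : 'I_m -> nat) b :
  cntf m b (cn c) (fun j i => lexR (cn c) i j) m = H c b (ltl c).
Proof.
rewrite /cntf /H big_mkord; apply: eq_bigr => x _.
congr (if _ <= b then _ else _).
rewrite /S big_mkord [RHS]big_mkcond /=; apply: eq_bigr => y _.
rewrite /lexR !cnE lex_equiv /le /ltl eq_sym //.
Qed.

Lemma sum_lt_pow m (c : 'I_m -> nat) : \sum_(p < m) c p < 2 ^ (\sum_(p < m) nbits (c p)).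
Proof.
apply: (big_rec2 (fun x y => x < 2 ^ y)) => // i y1 y2 _ Hy.
exact: add_lt_pow (lt_nbits _) Hy.
Qed.

Lemma nbits_VV m (c : 'I_m -> nat) b : nbits (VV c b) <= pb_size c b + 4.
Proof.
apply: nbits_lt; first lia.
rewrite /VV /pb_size.
have H1 := add_lt_pow (add_lt_pow (ltn_expl m (isT : 1 < 2)) (lt_nbits b)) (sum_lt_pow c).
have H2 : 10 < 2 ^ 4 by [].
exact: add_lt_pow H1 H2.
Qed.

Lemma Ktot_bound m (c : 'I_m -> nat) b :
  Ktot m (VV c b) <= (400 * 1000) * (pb_size c b).+1 ^ 3.
Proof.
have HB := nbits_VV c b.
have Hm : m <= pb_size c b by rewrite /pb_size; lia.
rewrite /Ktot /Kbo /Kin /A.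
move: HB Hm; move: (nbits (VV c b)) (pb_size c b) => B P HB Hm.
have -> : P.+1 ^ 3 = P.+1 * P.+1 * P.+1 by rewrite (expnS _ 2) expnS expn1; lia.
have [a Ea] : {a | a = 300 * (50 + B)} by exists (300 * (50 + B)).
rewrite -Ea.
have Ha : a <= (162 * 100) * P.+1 by lia.
have Ha1 : 1 <= a by lia.
have Hm' : m <= P.+1 by lia.
move: P.+1 Ha Hm' => N Ha Hm'.
have HN : 1 <= N by lia.
have E1 : m * (a + ((a + a).+1 + a) + 1) + a + 1 <= 8 * a * N by nia.
have E3 : m * (a + (a + (a + (m * (a + ((a + a).+1 + a) + 1) + a + 1 + ((a + a).+1 + a)))) + 1) + a + 1 + a
   <= 19 * a * N * N by nia.
apply: leq_trans E3 _.
have H4 := leq_mul (leq_mul Ha (leqnn N)) (leqnn N).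
nia.
Qed.

Theorem lemma2 :
  exists (prog_l prog_h : com) (C k : nat),
    forall (n m : nat) (c : 'I_m -> nat) (b : nat) (A : 'I_n -> {set 'I_m}),
      (exists l, is_lo c b l /\ runs_to prog_l (pb_input c b) l (C * (pb_size c b).+1 ^ k)) /\
      (exists h, is_ho c b h /\ runs_to prog_h (pb_input c b) h (C * (pb_size c b).+1 ^ k)).
Proof.
exists (prog (lexb (Vv 0) (Vv 1))), (prog (lexb (Vv 1) (Vv 0))), (400 * 1000), 3.
move=> n m c b _.
have HV10 : 10 <= VV c b by rewrite /VV; lia.
have HmV : m <= VV c b by rewrite /VV; lia.
have HSV : \sum_(0 <= y < m) cn c y <= VV c b by rewrite sum_cn /VV; lia.
split.
- exists (H c b (ltl c)); split; first exact: lo_ok.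
  have Hc : forall mem i j s n0, St m b (VV c b) (cn c) mem i j s n0 -> i < m -> j < m ->
      (beval mem (lexb (Vv 0) (Vv 1))).1 = (fun j i => lexR (cn c) i j) j i.
    by move=> mem i j s n0 HS Hi Hj; rewrite (lexb_val HS) ?(val_V0 HS) ?(val_V1 HS).
  have [f [mem' [k [E [Hk Ho]]]]] := prog_ok HV10 HmV HSV Hc isT isT (init_St c b).
  exists f, mem', k; split => //; split; last by rewrite Ho cntf_l.
  exact: leq_trans Hk (Ktot_bound c b).
- exists (H c b (lth c)); split; first exact: ho_ok.
  have Hc : forall mem i j s n0, St m b (VV c b) (cn c) mem i j s n0 -> i < m -> j < m ->
      (beval mem (lexb (Vv 1) (Vv 0))).1 = (fun j i => lexR (cn c) j i) j i.
    by move=> mem i j s n0 HS Hi Hj; rewrite (lexb_val HS) ?(val_V0 HS) ?(val_V1 HS).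
  have [f [mem' [k [E [Hk Ho]]]]] := prog_ok HV10 HmV HSV Hc isT isT (init_St c b).
  exists f, mem', k; split => //; split; last by rewrite Ho cntf_h.
  exact: leq_trans Hk (Ktot_bound c b).
Qed.
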